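(* Let $T$ be a ditree, let $S_1,\dots,S_t$ be all the source sets and sink sets of $T$ that contain no leaf of $T$, and let $\mathcal{L}$ be the set of all leaves of $T$. Let $M=\mathcal{L}\cup\{s_1,\dots,s_t\}$ where $s_i\in S_i$ for each $i$ (so $M$ contains $\mathcal{L}$ and exactly one vertex from each $S_i$). Then $M$ is a minimum-size geodetic set of $T$.
   Context: All digraphs are finite, without loops or parallel arcs. The underlying undirected graph of a digraph is obtained by forgetting orientations and deleting parallel edges. A ditree is a digraph whose underlying undirected graph is a tree (it may contain $2$-cycles, i.e., pairs of opposite arcs $uv,vu$). A leaf is a vertex of degree $1$ in the underlying undirected graph. For $S\subseteq V(D)$, $N^-(S)$ (resp. $N^+(S)$) is the set of vertices outside $S$ having an arc to (resp. from) some vertex of $S$. A source set is a maximal strongly connected component $S$ with $N^-(S)\setminus S=\emptyset$; a sink set is a maximal strongly connected component $S$ with $N^+(S)\setminus S=\emptyset$. For vertices $u,v$, $I(u,v)$ is the set of vertices on some shortest directed path from $u$ to $v$; for $S\subseteq V(D)$, $I(S)=\bigcup_{u,v\in S}(I(u,v)\cup I(v,u))$. A geodetic set is a set $S$ with $I(S)=V(D)$. *)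

(* Defs.v *)
(* A digraph on a finite vertex type V is an arc relation
   a : rel V (no parallel arcs by construction; no loops = irreflexive a). *)
From mathcomp Require Import all_boot.
Set Implicit Arguments.
Unset Strict Implicit.
Unset Printing Implicit Defensive.

Section Digraphs.
Variables (V : finType) (a : rel V).

Definition und : rel V := fun u v => a u v || a v u.

Definition und_connected : Prop := forall u v : V, connect und u v.
Definition und_acyclic : Prop :=
  forall c : seq V, uniq c -> 2 < size c -> ~~ cycle und c.

Definition ditree : Prop := irreflexive a /\ und_connected /\ und_acyclic.

Definition is_leaf (v : V) : bool := #|[set w | und v w]| == 1.
Definition leaves : {set V} := [set v | is_leaf v].

Definition scc (v : V) : {set V} := [set w | connect a v w && connect a w v].
Definition is_scc (S : {set V}) : bool := [exists v, S == scc v].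

Definition source_set (S : {set V}) : bool :=
  is_scc S && [forall x, forall y, ((y \in S) && a x y) ==> (x \in S)].
Definition sink_set (S : {set V}) : bool :=
  is_scc S && [forall x, forall y, ((x \in S) && a x y) ==> (y \in S)].

Definition leafless_source_sink_sets : {set {set V}} :=
  [set S | (source_set S || sink_set S) && [disjoint S & leaves]].

(* directed walks: u :: p is a directed walk from u to last u p *)
Definition dwalk (u v : V) (p : seq V) : Prop := path a u p /\ last u p = v.

Definition in_interval (u v w : V) : Prop :=
  exists p : seq V, [/\ dwalk u v p, w \in u :: p &
    forall q : seq V, dwalk u v q -> size p <= size q].

Definition geodetic (S : {set V}) : Prop :=
  forall w : V, exists u v : V,
    [/\ u \in S, v \in S & in_interval u v w \/ in_interval v u w].

Definition min_geodetic (M : {set V}) : Prop :=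
  geodetic M /\ forall S : {set V}, geodetic S -> #|M| <= #|S|.

End Digraphs.

(* Main.v *)
Require Import Defs.
From mathcomp Require Import all_boot zify.
Set Implicit Arguments.
Unset Strict Implicit.
Unset Printing Implicit Defensive.

Section Tree.
Variables (V : finType) (a : rel V).
Hypothesis Hirr : irreflexive a.
Hypothesis Hacyc : und_acyclic a.

Definition avoid (e : rel V) (w : V) : rel V :=
  fun x y => [&& e x y, x != w & y != w].

Lemma und_sym x y : und a x y = und a y x.
Proof. by rewrite /und orbC. Qed.

Lemma und_irr x : und a x x = false.
Proof. by rewrite /und Hirr. Qed.

Lemma und_neq x y : und a x y -> x != y.
Proof. by apply: contraTneq => ->; rewrite und_irr. Qed.

Lemma avoid_sym w : symmetric (avoid (und a) w).
Proof. by move=> x y; rewrite /avoid und_sym andbA andbAC -andbA. Qed.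

Lemma avoid_csym w x y :
  connect (avoid (und a) w) x y = connect (avoid (und a) w) y x.
Proof. exact: (sym_connect_sym (@avoid_sym w)). Qed.

Lemma avoid_sub e w : subrel (avoid e w) e.
Proof. by move=> x y /andP[]. Qed.

Lemma a_und : subrel a (und a).
Proof. by move=> x y; rewrite /und => ->. Qed.

Lemma avoid_a_und w : subrel (avoid a w) (avoid (und a) w).
Proof. by move=> x y /and3P[h1 h2 h3]; rewrite /avoid a_und ?h2 ?h3. Qed.

Lemma avoid_notin e w x p : path (avoid e w) x p -> x != w -> w \notin x :: p.
Proof.
elim: p x => [|y p IH] x /=; first by rewrite inE eq_sym.
case/andP=> /and3P[_ _ yw] pp xw; rewrite inE eq_sym (negPf xw) /=.
exact: IH.
Qed.

Lemma path_avoid e w x p : path e x p -> w \notin x :: p -> path (avoid e w) x p.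
Proof.
elim: p x => [|y p IH] x //=.
case/andP=> exy pp; rewrite in_cons negb_or => /andP[xw yp].
move: (yp); rewrite in_cons negb_or => /andP[yw wp].
rewrite /avoid exy eq_sym xw eq_sym yw /=; exact: IH.
Qed.

Lemma conn_last (e : rel V) x p y : path e x p -> y \in x :: p -> connect e y (last x p).
Proof.
elim: p x y => [|z p IH] x y /=; first by rewrite inE => _ /eqP->; apply: connect0.
case/andP=> exz pz; rewrite inE => /orP[/eqP->|yin].
  exact: connect_trans (connect1 exz) (IH z z pz (mem_head _ _)).
exact: IH.
Qed.

Lemma conn_first (e : rel V) x p y : path e x p -> y \in x :: p -> connect e x y.
Proof. by move=> pp yin; apply: (path_connect pp). Qed.

Lemma LT w n1 n2 : und a w n1 -> und a w n2 -> n1 != n2 ->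
  connect (avoid (und a) w) n1 n2 -> False.
Proof.
move=> h1 h2 ne /connectP[p pp El].
case/shortenP: pp El => q pq uq _ El.
have n1w : n1 != w by rewrite eq_sym und_neq.
have wn : w \notin n1 :: q := avoid_notin pq n1w.
have qn : q != [::] by apply: contraNneq ne => qe; rewrite El qe.
have U : uniq (w :: n1 :: q).
  by rewrite /= -/(uniq (n1 :: q)) uq andbT; move: wn; rewrite inE negb_or => /andP[-> ->].
have S : 2 < size (w :: n1 :: q) by case: (q) qn.
have C : cycle (und a) (w :: n1 :: q).
  rewrite /= h1 /= rcons_path (sub_path (@avoid_sub _ _) pq) -El /=.
  by rewrite und_sym.
by move: (Hacyc U S); rewrite C.
Qed.

Lemma LA u p q : uniq (u :: p) -> path (und a) u p -> path (und a) u q ->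
  last u q = last u p -> {subset u :: p <= u :: q}.
Proof.
move=> U P Q L x xin; apply/negPn/negP => xq.
have xu : x != u by apply: contraNneq xq => ->; exact: mem_head.
have xl : x != last u p by rewrite -L; apply: contraNneq xq => ->; exact: mem_last.
have xp : x \in p by move: xin; rewrite inE (negPf xu).
move: U P L xl; case/splitPr: xp => p1 p2 U P L xl.
case: p2 U P L xl => [|t2 p3] U P L xl; first by rewrite last_cat /= eqxx in xl.
set t1 := last u p1.
move: P; rewrite cat_path /= => /andP[P1 /and3P[h1 h2 P3]].
move: U; rewrite -cat_cons cat_uniq => /and3P[U1 /hasPn H U2].
have xp1 : x \notin u :: p1 := H x (mem_head _ _).
have t2p1 : t2 \notin u :: p1 by apply: H; rewrite !inE eqxx orbT.
have xp3 : x \notin t2 :: p3 by case/andP: U2.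
apply: (@LT x t1 t2).
- by rewrite und_sym.
- done.
- by apply: contraNneq t2p1 => <-; exact: mem_last.
have c1 : connect (avoid (und a) x) u t1 := conn_last (path_avoid P1 xp1) (mem_head _ _).
have c2 : connect (avoid (und a) x) u (last u q) := conn_last (path_avoid Q xq) (mem_head _ _).
have c3 : connect (avoid (und a) x) t2 (last t2 p3) := conn_last (path_avoid P3 xp3) (mem_head _ _).
rewrite last_cat /= in L.
rewrite avoid_csym in c1; rewrite avoid_csym in c3.
by apply: connect_trans c1 (connect_trans c2 _); rewrite L.
Qed.

Lemma short_uniq u v p : dwalk a u v p ->
  (forall q, dwalk a u v q -> size p <= size q) -> uniq (u :: p).
Proof.
move=> [P L] H.
case/shortenP: P L => p' P' U' S' L.
have := H p' (conj P' L) => sz.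
apply: (leq_size_uniq U') => //.
by move=> x; rewrite !inE => /orP[->//|/S' ->]; rewrite orbT.
Qed.

Lemma interval_of_path u p w : uniq (u :: p) -> path a u p -> w \in u :: p ->
  in_interval a u (last u p) w.
Proof.
move=> U P wi; exists p; split => //.
move=> q [Q L].
have := LA U (sub_path a_und P) (sub_path a_und Q) L => sub.
by have := uniq_leq_size U sub.
Qed.

Lemma interior_deg x p l : uniq (x :: p) -> path (und a) x p -> l \in x :: p ->
  l != x -> l != last x p ->
  exists t1 t2, [/\ t1 != t2, und a l t1 & und a l t2].
Proof.
move=> U P li lx ll.
have lp : l \in p by move: li; rewrite inE (negPf lx).
move: U P ll; case/splitPr: lp => p1 p2 U P ll.
case: p2 U P ll => [|t2 p3] U P ll; first by rewrite last_cat /= eqxx in ll.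
move: P; rewrite cat_path /= => /andP[P1 /and3P[h1 h2 P3]].
move: U; rewrite -cat_cons cat_uniq => /and3P[U1 /hasPn H U2].
have t2p1 : t2 \notin x :: p1 by apply: H; rewrite !inE eqxx orbT.
exists (last x p1), t2; split => //.
- by apply: contraNneq t2p1 => <-; exact: mem_last.
- by rewrite und_sym.
Qed.

Lemma not_leaf l t1 t2 : t1 != t2 -> und a l t1 -> und a l t2 -> ~~ is_leaf a l.
Proof.
move=> ne h1 h2; rewrite /is_leaf.
have : #|[set t1; t2]| <= #|[set w | und a l w]|.
  by apply: subset_leq_card; apply/subsetP => t; rewrite !inE => /orP[]/eqP->.
by rewrite cards2 ne; case: #|_| => // -[].
Qed.

Lemma interval_leaf u v l : in_interval a u v l -> l \in leaves a -> (l = u \/ l = v).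
Proof.
case=> p [[P L] li M] lL.
have U := short_uniq (conj P L) M.
have [->|lu] := eqVneq l u; first by left.
have [lv|lv] := eqVneq l (last u p); first by right; rewrite lv.
have [t1 [t2 [ne h1 h2]]] := interior_deg U (sub_path a_und P) li lu lv.
by move: lL; rewrite inE (negPf (not_leaf ne h1 h2)).
Qed.

Lemma leaves_in (S : {set V}) l : geodetic a S -> l \in leaves a -> l \in S.
Proof.
move=> G lL; have [u [v [uS vS H]]] := G l.
by case: H => /interval_leaf /(_ lL) [] ->.
Qed.

Lemma path_back (C : {set V}) x p z : path a x p -> z \in x :: p -> z \in C ->
  (forall x y, y \in C -> a x y -> x \in C) -> x \in C.
Proof.
move=> P zi zC H; elim: p x P zi => [|y p IH] x /=.
  by rewrite inE => _ /eqP<-.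
case/andP=> axy P; rewrite inE => /orP[/eqP<-//|zi].
exact: H (IH y P zi) axy.
Qed.

Lemma path_fwd (C : {set V}) x p z : path a x p -> z \in x :: p -> z \in C ->
  (forall x y, x \in C -> a x y -> y \in C) -> last x p \in C.
Proof.
move=> P zi zC H; elim: p x z P zi zC => [|y p IH] x z /=.
  by rewrite inE => _ /eqP->.
case/andP=> axy P; rewrite inE => /orP[/eqP-> xC|zi zC].
  apply: (IH y y P (mem_head _ _)); exact: H xC axy.
exact: IH zi zC.
Qed.

Lemma source_closed (C : {set V}) : source_set a C -> forall x y, y \in C -> a x y -> x \in C.
Proof.
case/andP=> _ /forallP H x y yC axy.
by have /forallP/(_ y)/implyP := H x; apply; rewrite yC axy.
Qed.

Lemma sink_closed (C : {set V}) : sink_set a C -> forall x y, x \in C -> a x y -> y \in C.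
Proof.
case/andP=> _ /forallP H x y xC axy.
by have /forallP/(_ y)/implyP := H x; apply; rewrite xC axy.
Qed.

Lemma interval_meet (C : {set V}) u v z : in_interval a u v z -> z \in C ->
  source_set a C || sink_set a C -> (u \in C) || (v \in C).
Proof.
case=> p [[P L] zi _] zC /orP[/source_closed H|/sink_closed H].
  by rewrite (path_back P zi zC H).
by rewrite -L (path_fwd P zi zC H) orbT.
Qed.

Lemma scc_self v : v \in scc a v.
Proof. by rewrite inE connect0. Qed.

Lemma meet (S C : {set V}) : geodetic a S -> source_set a C || sink_set a C ->
  exists2 x, x \in S & x \in C.
Proof.
move=> G H; have /andP[/existsP[v /eqP E] _] : is_scc a C && true.
  by case/orP: H => /andP[->].
have vC : v \in C by rewrite E scc_self.
have [u [y [uS yS I]]] := G v.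
case: I => /interval_meet /(_ vC H) /orP[];
  by [move=> ?; exists u | move=> ?; exists y].
Qed.

Lemma scc_eq x y : y \in scc a x -> scc a y = scc a x.
Proof.
rewrite inE => /andP[xy yx]; apply/setP => z; rewrite !inE.
apply/andP/andP => [[yz zy]|[xz zx]]; split.
- exact: connect_trans xy yz.
- exact: connect_trans zy yx.
- exact: connect_trans yx xz.
- exact: connect_trans zx xy.
Qed.

Lemma scc_disj (C1 C2 : {set V}) x : is_scc a C1 -> is_scc a C2 -> x \in C1 -> x \in C2 -> C1 = C2.
Proof.
move=> /existsP[v1 /eqP->] /existsP[v2 /eqP->] h1 h2.
by rewrite -(scc_eq h1) -(scc_eq h2).
Qed.

Lemma source_exists c : exists2 x, source_set a (scc a x) & connect a x c.
Proof.
pose F x := #|[set y | connect a y x]|.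
case: (@arg_minnP V c (fun x => connect a x c) F (connect0 a c)) => x xc Hmin.
exists x => //; apply/andP; split; first by apply/existsP; exists x.
apply/forallP => z; apply/forallP => y; apply/implyP => /andP[yC azy].
move: yC; rewrite !inE => /andP[xy yx].
have zx : connect a z x := connect_trans (connect1 azy) yx.
rewrite zx andbT; apply/negPn/negP => nxz.
have : F z < F x.
  apply: proper_card; apply/properP; split.
    by apply/subsetP => t; rewrite !inE => tz; apply: connect_trans tz zx.
  by exists x; rewrite !inE ?connect0.
by rewrite ltnNge Hmin // (connect_trans zx xc).
Qed.

Lemma sink_exists c : exists2 x, sink_set a (scc a x) & connect a c x.
Proof.
pose F x := #|[set y | connect a x y]|.
case: (@arg_minnP V c (fun x => connect a c x) F (connect0 a c)) => x xc Hmin.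
exists x => //; apply/andP; split; first by apply/existsP; exists x.
apply/forallP => y; apply/forallP => z; apply/implyP => /andP[yC ayz].
move: yC; rewrite !inE => /andP[xy yx].
have xz : connect a x z := connect_trans xy (connect1 ayz).
rewrite xz /=; apply/negPn/negP => nzx.
have : F z < F x.
  apply: proper_card; apply/properP; split.
    by apply/subsetP => t; rewrite !inE => zt; apply: connect_trans xz zt.
  by exists x; rewrite !inE ?connect0.
by rewrite ltnNge Hmin // (connect_trans xc xz).
Qed.

Lemma conn_avoid_und w u v : connect (avoid a w) u v -> connect (avoid (und a) w) u v.
Proof.
apply: connect_sub => x y h; apply: connect1; exact: avoid_a_und.
Qed.

Lemma avoid_or w m p : path a m p ->
  connect (avoid a w) m (last m p) \/ (connect a m w /\ connect a w (last m p)).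
Proof.
move=> P; case: (boolP (w \in m :: p)) => wi.
  by right; split; [exact: (path_connect P wi) | exact: conn_last P wi].
by left; apply: conn_last (path_avoid P wi) (mem_head _ _).
Qed.

Lemma avoid_notin_last (e : rel V) w x p : path (avoid e w) x p -> last x p != w ->
  w \notin x :: p.
Proof.
case: p => [|y p] /=; first by rewrite inE eq_sym.
case/andP=> /and3P[exy xw yw] P _.
have P' : path (avoid e w) x (y :: p) by rewrite /= P andbT /avoid exy xw yw.
exact: avoid_notin P' xw.
Qed.

Lemma first_step w x : connect a w x -> x != w -> exists2 n, a w n & connect (avoid a w) n x.
Proof.
move=> /connectP[p P ->] xw; case/shortenP: P xw => q Q U _ xw.
case: q Q U xw => [|n q] /=; first by rewrite eqxx.
case/andP=> awn Q /andP[wn U] xw; exists n => //.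
exact: conn_last (path_avoid Q wn) (mem_head _ _).
Qed.

Lemma last_step w x : connect a x w -> x != w -> exists2 n, a n w & connect (avoid a w) x n.
Proof.
move=> /connectP[p P E] xw; case/shortenP: P E => q Q U _ E.
case/lastP: q Q U E => [|q z] Q U E; first by move: xw; rewrite E eqxx.
rewrite last_rcons in E; rewrite -E in Q U.
move: Q; rewrite rcons_path => /andP[Q h].
move: U; rewrite -rcons_cons rcons_uniq => /andP[wi U].
exists (last x q) => //.
exact: conn_last (path_avoid Q wi) (mem_head _ _).
Qed.

Lemma conn_neq w u v : connect (avoid a w) u v -> v != w -> u != w.
Proof.
move=> /connectP[p P ->]; case: p P => [|y p] //= /andP[/and3P[_ h _] _] _; exact: h.
Qed.

Lemma conn_neq' w u v : connect (avoid a w) u v -> u != w -> v != w.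
Proof.
move=> /connectP[p P ->] uw; apply: contraNneq (avoid_notin P uw) => <-.
exact: mem_last.
Qed.

Lemma a_neq x y : a x y -> x != y.
Proof. by move=> h; apply/eqP => e; move: h; rewrite e Hirr. Qed.

Variable s : {set V} -> V.
Hypothesis Hs : forall S, S \in leafless_source_sink_sets a -> s S \in S.

Local Notation M := (leaves a :|: [set s S | S in leafless_source_sink_sets a]).

Definition Yw w n x := connect (avoid a w) n x && connect (avoid a w) x n.
Definition Bk w n := a n w && [exists u, (u \in M) && connect (avoid a w) u n].
Definition Fk w n := a w n && [exists v, (v \in M) && connect (avoid a w) n v].

Lemma M_in (C : {set V}) : source_set a C || sink_set a C -> exists2 m, m \in M & m \in C.
Proof.
move=> H; case: (boolP [disjoint C & leaves a]) => D.
  have CF : C \in leafless_source_sink_sets a by rewrite inE H D.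
  by exists (s C); [rewrite in_setU imset_f ?orbT | exact: Hs].
move: D; rewrite -setI_eq0 => /set0Pn [x]; rewrite in_setI => /andP[xC xL].
by exists x => //; rewrite in_setU xL.
Qed.

Lemma IN_B w n : a n w -> ~~ a w n -> Bk w n.
Proof.
move=> anw nawn; rewrite /Bk anw /=.
have [x src xn] := source_exists n.
have [m mM mC] : exists2 m, m \in M & m \in scc a x by apply: M_in; rewrite src.
have mn : connect a m n by move: mC; rewrite inE => /andP[_ mx]; exact: connect_trans mx xn.
apply/existsP; exists m; rewrite mM /=.
move: mn => /connectP[p P E]; rewrite E.
case: (avoid_or w P) => [//|[_ wn]]; rewrite -E in wn.
exfalso; have nw : n != w := a_neq anw.
have [n' awn' c] := first_step wn nw.
have [e|ne] := eqVneq n' n; first by move: nawn; rewrite -e awn'.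
apply: (@LT w n' n) => //; first exact: a_und.
- by rewrite und_sym a_und.
- exact: conn_avoid_und.
Qed.

Lemma OUT_F w n : a w n -> ~~ a n w -> Fk w n.
Proof.
move=> awn nanw; rewrite /Fk awn /=.
have [x snk nx] := sink_exists n.
have [m mM mC] : exists2 m, m \in M & m \in scc a x by apply: M_in; rewrite snk orbT.
have nm : connect a n m by move: mC; rewrite inE => /andP[xm _]; exact: connect_trans nx xm.
apply/existsP; exists m; rewrite mM /=.
move: nm => /connectP[p P E]; rewrite E.
case: (avoid_or w P) => [//|[nw' _]].
exfalso; have nw : n != w by rewrite eq_sym (a_neq awn).
have [n' anw' c] := last_step nw' nw.
have [e|ne] := eqVneq n' n; first by move: nanw; rewrite -e anw'.
apply: (@LT w n' n) => //.
- by rewrite und_sym a_und.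
- exact: a_und.
- by rewrite avoid_csym; exact: conn_avoid_und.
Qed.

Lemma CY w x : x \in scc a w -> x != w -> exists n, [&& a w n, a n w & Yw w n x].
Proof.
rewrite inE => /andP[wx xw] ne.
have [n1 a1 c1] := first_step wx ne.
have [n2 a2 c2] := last_step xw ne.
have [e|ne12] := eqVneq n1 n2.
  by exists n1; rewrite /Yw a1 c1 e a2 c2.
exfalso; apply: (@LT w n1 n2) ne12 _; first exact: a_und.
- by rewrite und_sym a_und.
- exact: connect_trans (conn_avoid_und c1) (conn_avoid_und c2).
Qed.

Lemma Fa w n x y : a w n -> Yw w n x -> a x y -> y != w -> ~~ connect a y w -> Fk w n.
Proof.
move=> awn /andP[nx xn] axy yw nyw; rewrite /Fk awn /=.
have [z snk yz] := sink_exists y.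
have [m mM mC] : exists2 m, m \in M & m \in scc a z by apply: M_in; rewrite snk orbT.
have ym : connect a y m by move: mC; rewrite inE => /andP[zm _]; exact: connect_trans yz zm.
apply/existsP; exists m; rewrite mM /=.
have nw : n != w by rewrite eq_sym (a_neq awn).
have xw : x != w := conn_neq xn nw.
have c1 : connect (avoid a w) x y by apply: connect1; rewrite /avoid axy xw yw.
have c2 : connect (avoid a w) y m.
  move: ym => /connectP[p P ->]; case: (avoid_or w P) => [//|[yw' _]].
  by rewrite yw' in nyw.
exact: connect_trans nx (connect_trans c1 c2).
Qed.

Lemma Fb w n x y : a n w -> Yw w n x -> a y x -> y != w -> ~~ connect a w y -> Bk w n.
Proof.
move=> anw /andP[nx xn] ayx yw nwy; rewrite /Bk anw /=.
have [z src zy] := source_exists y.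
have [m mM mC] : exists2 m, m \in M & m \in scc a z by apply: M_in; rewrite src.
have my : connect a m y by move: mC; rewrite inE => /andP[_ mz]; exact: connect_trans mz zy.
apply/existsP; exists m; rewrite mM /=.
have nw : n != w := a_neq anw.
have xw : x != w := conn_neq' nx nw.
have c1 : connect (avoid a w) y x by apply: connect1; rewrite /avoid ayx xw yw.
have c2 : connect (avoid a w) m y.
  move: my => /connectP[p P E]; rewrite E; case: (avoid_or w P) => [//|[_ wy']].
  by move: nwy; rewrite E wy'.
exact: connect_trans c2 (connect_trans c1 xn).
Qed.

Lemma Yclosed w n : a w n -> a n w ->
  (forall x y, Yw w n x -> a x y -> y != w -> connect a y w) ->
  (forall x y, Yw w n x -> a y x -> y != w -> connect a w y) ->
  forall x t, Yw w n x -> und a x t -> t != w -> Yw w n t.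
Proof.
move=> awn anw H1 H2 x t Yx xt tw; have /andP[nx xn] := Yx.
have nw : n != w := a_neq anw.
have xw : x != w := conn_neq' nx nw.
case/orP: xt => [axt|atx].
- have tw' := H1 x t Yx axt tw.
  have [n' an' c] := last_step tw' tw.
  have [e|ne] := eqVneq n' n.
    rewrite e in c; rewrite /Yw c andbT.
    by apply: connect_trans nx (connect1 _); rewrite /avoid axt xw tw.
  exfalso; apply: (@LT w n' n) ne _; first by rewrite und_sym a_und.
  + exact: a_und.
  + have c' := conn_avoid_und c; rewrite avoid_csym in c'.
    apply: connect_trans c' (connect_trans (connect1 _) (conn_avoid_und xn)).
    by rewrite /avoid und_sym (a_und axt) tw xw.
- have wt := H2 x t Yx atx tw.
  have [n' an' c] := first_step wt tw.
  have ctx : connect (avoid a w) t x by apply: connect1; rewrite /avoid atx tw xw.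
  have [e|ne] := eqVneq n' n.
    rewrite e in c; rewrite /Yw c /=.
    exact: connect_trans ctx xn.
  exfalso; apply: (@LT w n' n) ne _; first exact: a_und.
  + exact: a_und.
  + exact: conn_avoid_und (connect_trans c (connect_trans ctx xn)).
Qed.

Lemma chord x r l t : uniq (x :: rcons r l) -> path (und a) x (rcons r l) ->
  t \in x :: rcons r l -> und a l t -> t = last x r.
Proof.
move=> U P ti lt.
move: P; rewrite rcons_path => /andP[P h].
move: U; rewrite -rcons_cons rcons_uniq => /andP[li U].
have tl : t != l by rewrite eq_sym und_neq.
have ti' : t \in x :: r by move: ti; rewrite -rcons_cons mem_rcons inE (negPf tl).
apply/eqP/negP => ne; apply: (@LT l t (last x r)) => //.
- by rewrite und_sym h.
- by apply/negP.
- exact: conn_last (path_avoid P li) ti'.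
Qed.

Lemma ext_max w n k p : #|V| - size p <= k -> path (und a) n p -> uniq (w :: n :: p) ->
  exists q, [/\ path (und a) n q, uniq (w :: n :: q) &
    forall t, und a (last n q) t -> t \in w :: n :: q].
Proof.
elim: k p => [|k IH] p Hk P U;
  (case: (boolP [exists t, und a (last n p) t && (t \notin w :: n :: p)]) =>
     [/existsP[t /andP[h ti]]|/existsPn H]; last first).
- exists p; split => // t h; apply/negPn/negP => ti.
  by move: (H t); rewrite h ti.
- have U' : uniq (w :: n :: rcons p t) by rewrite -!rcons_cons rcons_uniq ti U.
  have sz : size (w :: n :: rcons p t) <= #|V|.
    by rewrite cardT; apply: uniq_leq_size U' _ => y _; rewrite mem_enum.
  move: sz; rewrite /= size_rcons => sz; exfalso; move: Hk sz; set K := #|V|; set m := size p; move=> Hk sz; lia.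
- exists p; split => // t h; apply/negPn/negP => ti.
  by move: (H t); rewrite h ti.
- have U' : uniq (w :: n :: rcons p t) by rewrite -!rcons_cons rcons_uniq ti U.
  have sz : size (w :: n :: rcons p t) <= #|V|.
    by rewrite cardT; apply: uniq_leq_size U' _ => y _; rewrite mem_enum.
  apply: (IH (rcons p t)) => //.
  + move: sz Hk; rewrite /= size_rcons; set K := #|V|; set m := size p; move=> sz Hk; lia.
  + by rewrite rcons_path P h.
Qed.

Lemma leaf_beyond w n : und a w n ->
  exists p, [/\ path (und a) n p, uniq (w :: n :: p) & last n p \in leaves a].
Proof.
move=> wn.
have U0 : uniq [:: w; n] by rewrite /= inE andbT; exact: und_neq wn.
have [q [P U H]] := ext_max (k := #|V|) (leq_subr _ _) (erefl true : path (und a) n [::]) U0.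
exists q; split => //.
case/lastP E: (n :: q) => [//|r l].
have ll : last n q = l by have := congr1 (last w) E; rewrite last_rcons.
have Pw : path (und a) w (rcons r l) by rewrite -E /= wn P.
have Uw : uniq (w :: rcons r l) by rewrite -E.
rewrite inE /is_leaf ll.
have -> : [set t | und a l t] = [set last w r].
  apply/setP => t; rewrite !inE; apply/idP/eqP => [lt|->].
    have ti : t \in w :: rcons r l by rewrite -E; apply: H; rewrite ll.
    exact: (chord Uw Pw ti lt).
  by move: Pw; rewrite rcons_path und_sym => /andP[].
by rewrite cards1.
Qed.

Lemma BI w n : a w n -> a n w -> Bk w n || Fk w n.
Proof.
move=> awn anw.
case: (boolP [exists x, exists y, [&& Yw w n x, a x y, y != w & ~~ connect a y w]])
  => [/existsP[x /existsP[y /and4P[Yx axy yw nyw]]]|/existsPn H1].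
  by rewrite (Fa awn Yx axy yw nyw) orbT.
case: (boolP [exists x, exists y, [&& Yw w n x, a y x, y != w & ~~ connect a w y]])
  => [/existsP[x /existsP[y /and4P[Yx ayx yw nwy]]]|/existsPn H2].
  by rewrite (Fb anw Yx ayx yw nwy).
have C1 : forall x y, Yw w n x -> a x y -> y != w -> connect a y w.
  move=> x y Yx axy yw; apply/negPn/negP => nyw.
  by move: (H1 x) => /existsPn/(_ y); rewrite Yx axy yw nyw.
have C2 : forall x y, Yw w n x -> a y x -> y != w -> connect a w y.
  move=> x y Yx ayx yw; apply/negPn/negP => nwy.
  by move: (H2 x) => /existsPn/(_ y); rewrite Yx ayx yw nwy.
have Ycl := Yclosed awn anw C1 C2.
have [p [P U L]] := leaf_beyond (a_und awn).
have Yp : forall q x, Yw w n x -> path (und a) x q -> w \notin x :: q -> Yw w n (last x q).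
  elim => [|y q IHq] x //= Yx /andP[xy P']; rewrite inE negb_or => /andP[_ wi].
  have wy : y != w by move: wi; rewrite inE negb_or eq_sym => /andP[].
  exact: (IHq y (Ycl x y Yx xy wy) P' wi).
have Yn : Yw w n n by rewrite /Yw connect0.
have wi : w \notin n :: p by case/andP: U.
have /andP[nl _] := Yp p n Yn P wi.
apply/orP; right; rewrite /Fk awn /=; apply/existsP; exists (last n p).
by rewrite in_setU L nl.
Qed.

Lemma tri w n : und a w n -> Bk w n || Fk w n.
Proof.
case anw: (a n w); case awn: (a w n) => h.
- exact: BI.
- by rewrite IN_B // awn.
- by rewrite OUT_F ?orbT // anw.
- by move: h; rewrite /und awn anw.
Qed.

Lemma Fs_scc C : C \in leafless_source_sink_sets a -> is_scc a C.
Proof. by rewrite inE => /andP[/orP[]/andP[]]. Qed.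

Lemma exF w : w \notin M -> exists n, Fk w n.
Proof.
move=> wM; case: (boolP [exists n, Fk w n]) => [/existsP//|/existsPn noF]; exfalso.
have wL : w \notin leaves a by apply: contra wM; rewrite in_setU => ->.
have ws : forall S, S \in leafless_source_sink_sets a -> s S != w.
  by move=> S SF; apply: contraNneq wM => <-; rewrite in_setU imset_f ?orbT.
have sinkC : sink_set a (scc a w).
  apply/andP; split; first by apply/existsP; exists w.
  apply/forallP => x; apply/forallP => y; apply/implyP => /andP[xC axy].
  apply/negPn/negP => yC.
  have [xw|xw] := eqVneq x w.
    rewrite xw in axy; case ayw: (a y w).
      by move: yC; rewrite inE (connect1 axy) (connect1 ayw).
    by move: (noF y); rewrite OUT_F // ayw.
  have [n /and3P[awn anw Yx]] := CY xC xw.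
  have yw : y != w by apply: contraNneq yC => ->; exact: scc_self.
  have nyw : ~~ connect a y w.
    apply: contra yC => yw'; rewrite inE yw' andbT.
    by move: xC; rewrite inE => /andP[wx _]; exact: connect_trans wx (connect1 axy).
  by move: (noF n); rewrite (Fa awn Yx axy yw nyw).
have leafless : [disjoint scc a w & leaves a].
  rewrite -setI_eq0; apply/eqP/setP => l; rewrite in_setI in_set0.
  apply/negP => /andP[lC lL].
  have lw : l != w by apply: contraNneq wL => <-.
  have [n /and3P[awn anw /andP[nl _]]] := CY lC lw.
  move: (noF n); rewrite /Fk awn /=; move/existsPn/(_ l).
  by rewrite in_setU lL nl.
have CF : scc a w \in leafless_source_sink_sets a by rewrite inE sinkC orbT leafless.
have [n /and3P[awn anw /andP[ns _]]] := CY (Hs CF) (ws _ CF).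
move: (noF n); rewrite /Fk awn /=; move/existsPn/(_ (s (scc a w))).
by rewrite in_setU imset_f ?orbT ?ns.
Qed.

Lemma exB w : w \notin M -> exists n, Bk w n.
Proof.
move=> wM; case: (boolP [exists n, Bk w n]) => [/existsP//|/existsPn noB]; exfalso.
have wL : w \notin leaves a by apply: contra wM; rewrite in_setU => ->.
have ws : forall S, S \in leafless_source_sink_sets a -> s S != w.
  by move=> S SF; apply: contraNneq wM => <-; rewrite in_setU imset_f ?orbT.
have srcC : source_set a (scc a w).
  apply/andP; split; first by apply/existsP; exists w.
  apply/forallP => x; apply/forallP => y; apply/implyP => /andP[yC axy].
  apply/negPn/negP => xC.
  have [yw|yw] := eqVneq y w.
    rewrite yw in axy; case awx: (a w x).
      by move: xC; rewrite inE (connect1 axy) (connect1 awx).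
    by move: (noB x); rewrite IN_B // awx.
  have [n /and3P[awn anw Yy]] := CY yC yw.
  have xw : x != w by apply: contraNneq xC => ->; exact: scc_self.
  have nwx : ~~ connect a w x.
    apply: contra xC => wx'; rewrite inE wx' /=.
    by move: yC; rewrite inE => /andP[_ yw']; exact: connect_trans (connect1 axy) yw'.
  by move: (noB n); rewrite (Fb anw Yy axy xw nwx).
have leafless : [disjoint scc a w & leaves a].
  rewrite -setI_eq0; apply/eqP/setP => l; rewrite in_setI in_set0.
  apply/negP => /andP[lC lL].
  have lw : l != w by apply: contraNneq wL => <-.
  have [n /and3P[awn anw /andP[_ ln]]] := CY lC lw.
  move: (noB n); rewrite /Bk anw /=; move/existsPn/(_ l).
  by rewrite in_setU lL ln.
have CF : scc a w \in leafless_source_sink_sets a by rewrite inE srcC leafless.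
have [n /and3P[awn anw /andP[_ sn]]] := CY (Hs CF) (ws _ CF).
move: (noB n); rewrite /Bk anw /=; move/existsPn/(_ (s (scc a w))).
by rewrite in_setU imset_f ?orbT ?sn.
Qed.

Lemma build w n1 n2 : Bk w n1 -> Fk w n2 -> n1 != n2 ->
  exists u v, [/\ u \in M, v \in M & in_interval a u v w].
Proof.
case/andP => a1 /existsP[u /andP[uM c1]].
case/andP => a2 /existsP[v /andP[vM c2]] ne.
move: c1 => /connectP[p1 P1 E1]; case/shortenP: P1 E1 => q1 Q1 U1 _ E1.
move: c2 => /connectP[p2 P2 E2]; case/shortenP: P2 E2 => q2 Q2 U2 _ E2.
have n1w : n1 != w := a_neq a1.
have n2w : n2 != w by rewrite eq_sym (a_neq a2).
have wq1 : w \notin u :: q1 by apply: avoid_notin_last Q1 _; rewrite -E1.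
have wq2 : w \notin n2 :: q2 := avoid_notin Q2 n2w.
exists u, v; split => //.
have -> : v = last u (q1 ++ w :: n2 :: q2) by rewrite last_cat /= E2.
apply: interval_of_path; last by rewrite inE mem_cat inE eqxx !orbT.
- have Uw : uniq (w :: n2 :: q2) by rewrite cons_uniq wq2 U2.
  rewrite -cat_cons cat_uniq U1 Uw andbT.
  apply/hasPn => x; rewrite inE => /orP[/eqP->//|xi]; apply/negP => xu.
  have cx1 : connect (avoid (und a) w) x n1.
    by rewrite E1; apply: conn_last (sub_path (@avoid_a_und w) Q1) xu.
  have cx2 : connect (avoid (und a) w) n2 x := conn_first (sub_path (@avoid_a_und w) Q2) xi.
  apply: (@LT w n1 n2) ne _; first by rewrite und_sym a_und.
  + exact: a_und.
  + rewrite avoid_csym in cx1; rewrite avoid_csym in cx2; exact: connect_trans cx1 cx2.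
- rewrite cat_path /= -E1 a1 a2 (sub_path (@avoid_sub _ _) Q1).
  by rewrite (sub_path (@avoid_sub _ _) Q2).
Qed.

Lemma build' w n1 n2 : Bk w n1 -> Fk w n2 -> n1 != n2 ->
  exists u v, [/\ u \in M, v \in M & in_interval a u v w \/ in_interval a v u w].
Proof.
move=> B F ne; have [u [v [uM vM I]]] := build B F ne.
by exists u, v; split => //; left.
Qed.

Lemma M_geodetic : geodetic a M.
Proof.
move=> w; case: (boolP (w \in M)) => wM.
  exists w, w; split => //; left.
  by apply: (@interval_of_path w [::] w) => //; rewrite mem_head.
have [n2 F2] := exF wM.
have [n1 B1] := exB wM.
have [e|ne] := eqVneq n1 n2; last exact: build' B1 F2 ne.
rewrite -e in F2.
have wn : und a w n1 by case/andP: B1 => h _; rewrite und_sym a_und.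
case: (boolP [exists n', und a w n' && (n' != n1)]) => [/existsP[n' /andP[wn' ne']]|/existsPn H].
  case/orP: (tri wn') => [B'|F'].
    exact: build' B' F2 ne'.
  by apply: build' B1 F' _; rewrite eq_sym.
exfalso; apply: (negP wM); rewrite in_setU; apply/orP; left.
rewrite inE /is_leaf; apply/cards1P; exists n1; apply/setP => t; rewrite !inE.
apply/idP/eqP => [wt|->//]; apply/eqP.
by move: (H t); rewrite wt /= negbK.
Qed.

Lemma M_min (S : {set V}) : geodetic a S -> #|M| <= #|S|.
Proof.
move=> G.
set Fs := leafless_source_sink_sets a.
have h1 : #|M| <= #|leaves a| + #|Fs|.
  rewrite cardsU; apply: leq_trans (leq_subr _ _) _.
  by rewrite leq_add2l; exact: leq_imset_card.
pose g C := if [pick x in S :&: C] is Some x then x else s C.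
have gP : forall C, C \in Fs -> g C \in S :&: C.
  move=> C CF; rewrite /g; case: pickP => [x //| none]; exfalso.
  have SS : source_set a C || sink_set a C by move: CF; rewrite inE => /andP[].
  have [x xS xC] := meet G SS.
  by move: (none x); rewrite in_setI xS xC.
have ginj : {in Fs &, injective g}.
  move=> C1 C2 h1' h2' e.
  have := gP _ h1'; have := gP _ h2'; rewrite !in_setI e => /andP[_ x2] /andP[_ x1].
  exact: (scc_disj (Fs_scc h1') (Fs_scc h2') x1 x2).
have gL : forall C, C \in Fs -> g C \notin leaves a.
  move=> C CF; have /andP[_ D] : (source_set a C || sink_set a C) && [disjoint C & leaves a].
    by move: CF; rewrite inE.
  have := gP _ CF; rewrite in_setI => /andP[_ gC].
  by move/setP/(_ (g C)): (disjoint_setI0 D); rewrite in_setI in_set0 gC /= => ->.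
have sub1 : leaves a \subset S by apply/subsetP => l; exact: leaves_in G.
have sub2 : g @: Fs \subset S :\: leaves a.
  apply/subsetP => x /imsetP[C CF ->]; rewrite in_setD gL //=.
  by have := gP _ CF; rewrite in_setI => /andP[].
have h2 : #|leaves a| + #|Fs| <= #|S|.
  rewrite -(cardsID (leaves a) S); apply: leq_add.
    by rewrite (setIidPr sub1).
  by rewrite -(card_in_imset ginj); exact: subset_leq_card sub2.
exact: leq_trans h1 h2.
Qed.

End Tree.

Theorem lemma5 (V : finType) (a : rel V) (s : {set V} -> V) :
  ditree a ->
  (forall S, S \in leafless_source_sink_sets a -> s S \in S) ->
  min_geodetic a (leaves a :|: [set s S | S in leafless_source_sink_sets a]).
Proof.
case=> Hirr [_ Hacyc] Hs; split.
  exact: M_geodetic.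
move=> S G; exact: M_min.
Qed.
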